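(* Let $G(z)=\sum_{n=1}^\infty\frac{i}{(z+(n-\frac12)i)^2}$, the meromorphic extension of the Cauchy transform of the logistic distribution $\mu_2(dx)=\frac{\pi}{2\cosh^2(\pi x)}dx$. Then (i) $\operatorname{Re}G(x+yi)>0$ for all $x>0$ and $y\ge-\frac12$; and (ii) $\operatorname{Im}G(yi)<0$ for all $y>-\frac12$. *)

(* Defs.v *)
From Stdlib Require Import Reals Lra.
Open Scope R_scope.

Record Cplx := mkC { Cre : R ; Cim : R }.

Definition Cadd (z w : Cplx) : Cplx := mkC (Cre z + Cre w) (Cim z + Cim w).
Definition Cmul (z w : Cplx) : Cplx :=
  mkC (Cre z * Cre w - Cim z * Cim w) (Cre z * Cim w + Cim z * Cre w).
Definition Cinv (z : Cplx) : Cplx :=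
  let d := Cre z * Cre z + Cim z * Cim z in mkC (Cre z / d) (- Cim z / d).
Definition Ci : Cplx := mkC 0 1.
Definition RtoC (r : R) : Cplx := mkC r 0.

Definition Gterm (n : nat) (z : Cplx) : Cplx :=
  let w := Cadd z (Cmul (RtoC (INR n - 1/2)) Ci) in
  Cmul Ci (Cinv (Cmul w w)).

(* The series sum_{n>=1} Gterm n z converges (in C, i.e. componentwise)
   to g.  Note infinite_sum f l means sum_{k>=0} f k = l, so we shift k = n-1. *)
Definition G_sum (z g : Cplx) : Prop :=
  infinite_sum (fun k => Cre (Gterm (S k) z)) (Cre g) /\
  infinite_sum (fun k => Cim (Gterm (S k) z)) (Cim g).

(* Main.v *)
Require Import Defs.
From Stdlib Require Import Reals Lra.
From Coquelicot Require Import Coquelicot.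
Open Scope R_scope.
Lemma Gterm_eq n x y : let Y := y + (INR n - 1/2) in
  Cre (Gterm n (mkC x y)) = (x*Y+Y*x)/((x*x+Y*Y)*(x*x+Y*Y)) /\
  Cim (Gterm n (mkC x y)) = (x*x-Y*Y)/((x*x+Y*Y)*(x*x+Y*Y)).
Proof.
intros Y. unfold Gterm, Cmul, Cadd, Cinv, Ci, RtoC; simpl.
set (r := INR n - 1/2) in *.
assert (E1: x + (r*0-0*1) = x) by ring. assert (E2: y + (r*1+0*0) = Y) by (unfold Y; ring).
rewrite E1, E2.
assert (E3: (x*x-Y*Y)*(x*x-Y*Y) + (x*Y+Y*x)*(x*Y+Y*x) = (x*x+Y*Y)*(x*x+Y*Y)) by ring.
rewrite E3. split; unfold Rdiv; ring.
Qed.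
Lemma tel_sum n : sum_f_R0 (fun k => /((INR k + 1)*(INR k + 2))) n = 1 - /(INR n + 2).
Proof.
induction n.
- simpl. field.
- rewrite tech5, IHn, S_INR. pose proof (pos_INR n). field. lra.
Qed.
Lemma tel_ex : ex_series (fun k => /((INR k + 1)*(INR k + 2))).
Proof.
exists 1. apply is_series_Reals. unfold infinite_sum.
assert (H: is_lim_seq (fun n => 1 - /(INR n + 2)) 1).
{ replace (Finite 1) with (Rbar_minus 1 0) by (simpl; f_equal; ring).
  apply is_lim_seq_minus'. apply is_lim_seq_const.
  replace (Finite 0) with (Rbar_inv p_infty) by reflexivity.
  apply is_lim_seq_inv. 2: discriminate.
  eapply is_lim_seq_le_p_loc. 2: apply is_lim_seq_INR.
  exists 0%nat. intros. lra. }
apply is_lim_seq_Reals. eapply is_lim_seq_ext. 2: exact H.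
intros; rewrite tel_sum; auto.
Qed.
Lemma comp_bound X Y N c P : 0 < c -> 0 < P -> X*X+Y*Y >= c*P ->
  -(X*X+Y*Y) <= N <= X*X+Y*Y ->
  Rabs (N/((X*X+Y*Y)*(X*X+Y*Y))) <= /c * /P.
Proof.
intros Hc HP HD HN. set (D := X*X+Y*Y) in *.
assert (HD0 : 0 < D) by nra.
unfold Rdiv. rewrite Rinv_mult.
set (u := /D). assert (Hu: D*u = 1) by (unfold u; field; lra).
assert (Hu0 : 0 < u) by (unfold u; apply Rinv_0_lt_compat; lra).
apply Rle_trans with u.
- apply Rabs_le. split; nra.
- rewrite <- Rinv_mult. unfold u. apply Rinv_le_contravar; nra.
Qed.
Definition Yk (y : R) k := y + (INR (S k) - 1/2).
Lemma conv x y c : 0 < c -> (forall k, x*x + Yk y k * Yk y k >= c*((INR k+1)*(INR k+2))) ->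
  ex_series (fun k => Cre (Gterm (S k) (mkC x y))) /\
  ex_series (fun k => Cim (Gterm (S k) (mkC x y))).
Proof.
intros Hc H.
assert (Hb : ex_series (fun k => /c * /((INR k+1)*(INR k+2)))).
{ exact (ex_series_scal (/c) _ tel_ex). }
assert (HP : forall k, 0 < (INR k+1)*(INR k+2)) by (intro k; pose proof (pos_INR k); nra).
split; apply (@ex_series_le R_AbsRing R_CompleteNormedModule _ (fun k => /c * /((INR k+1)*(INR k+2)))); try exact Hb; intro k; change norm with Rabs;
 destruct (Gterm_eq (S k) x y) as [E1 E2]; fold (Yk y k) in E1, E2;
 [rewrite E1 | rewrite E2]; apply comp_bound; auto;
 set (Y := Yk y k); pose proof (Rle_0_sqr (x-Y)); pose proof (Rle_0_sqr (x+Y)); pose proof (Rle_0_sqr x); pose proof (Rle_0_sqr Y); unfold Rsqr in *; split; nra.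
Qed.
Lemma Series_nonneg a : ex_series a -> (forall k, 0 <= a k) -> 0 <= Series a.
Proof.
intros He H. assert (E : Series (fun n => 0 * a n) = 0) by (rewrite Series_scal_l; ring).
rewrite <- E. apply Series_le; auto. intro; split; [lra | rewrite Rmult_0_l; auto].
Qed.
Lemma Yk_eq y k : Yk y k = y + INR k + 1/2.
Proof. unfold Yk; rewrite S_INR; lra. Qed.

Theorem mainTheorem8 :
  (forall x y : R, 0 < x -> -(1/2) <= y ->
     exists g : Cplx, G_sum (mkC x y) g /\ 0 < Cre g) /\
  (forall y : R, -(1/2) < y ->
     exists g : Cplx, G_sum (mkC 0 y) g /\ Cim g < 0).
Proof.
split.
- intros x y Hx Hy.
  set (m := Rmin (x*x) 1).
  assert (Hm1 : m <= 1) by apply Rmin_r.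
  assert (Hm2 : m <= x*x) by apply Rmin_l.
  assert (Hm0 : 0 < m) by (apply Rmin_pos; nra).
  destruct (conv x y (m/4)) as [Hre Him]. lra.
  { intro k. rewrite Yk_eq. pose proof (pos_INR k). set (K := INR k) in *.
    assert (K*K <= (y+K+1/2)*(y+K+1/2)) by nra.
    assert (m*(1+K*K) <= x*x + K*K) by nra.
    assert ((K+1)*(K+2) <= 4*(1+K*K)) by nra.
    nra. }
  exists (mkC (Series (fun k => Cre (Gterm (S k) (mkC x y))))
              (Series (fun k => Cim (Gterm (S k) (mkC x y))))).
  split. { split; simpl; apply is_series_Reals; apply Series_correct; auto. }
  simpl.
  assert (Hnn : forall k, 0 <= Cre (Gterm (S k) (mkC x y))).
  { intro k. destruct (Gterm_eq (S k) x y) as [E1 _]. fold (Yk y k) in E1. rewrite E1.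
    assert (0 <= Yk y k) by (rewrite Yk_eq; pose proof (pos_INR k); lra).
    apply Rmult_le_pos. nra. apply Rlt_le, Rinv_0_lt_compat.
    set (Y := Yk y k) in *. nra. }
  rewrite Series_incr_1 by auto.
  rewrite Series_incr_1 by (apply ex_series_incr_1 in Hre; exact Hre).
  assert (H1 : 0 < Cre (Gterm 2 (mkC x y))).
  { destruct (Gterm_eq 2 x y) as [E1 _]. rewrite E1.
    set (Y := y + (INR 2 - 1/2)). assert (1 <= Y) by (unfold Y; simpl; lra).
    apply Rmult_lt_0_compat. nra. apply Rinv_0_lt_compat. nra. }
  pose proof (Hnn 0%nat).
  assert (0 <= Series (fun k => Cre (Gterm (S (S (S k))) (mkC x y)))).
  { apply Series_nonneg. do 2 (apply ex_series_incr_1 in Hre). exact Hre. intro; apply Hnn. }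
  assert (Hg : forall a b c, 0 <= a -> 0 < b -> 0 <= c -> 0 < a + (b + c)) by (intros; lra).
  apply Hg; assumption.
- intros y Hy.
  set (e := y + 1/2). set (m := Rmin e 1).
  assert (Hm1 : m <= 1) by apply Rmin_r.
  assert (Hm2 : m <= e) by apply Rmin_l.
  assert (Hm0 : 0 < m) by (apply Rmin_pos; unfold e; lra).
  destruct (conv 0 y (m*m/2)) as [Hre Him]. nra.
  { intro k. rewrite Yk_eq. pose proof (pos_INR k).
    assert (m*(INR k + 1) <= y + INR k + 1/2) by (unfold e in *; nra).
    assert (0 <= m*(INR k+1)) by nra. nra. }
  exists (mkC (Series (fun k => Cre (Gterm (S k) (mkC 0 y))))
              (Series (fun k => Cim (Gterm (S k) (mkC 0 y))))).
  split. { split; simpl; apply is_series_Reals; apply Series_correct; auto. }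
  simpl.
  assert (Hneg : forall k, Cim (Gterm (S k) (mkC 0 y)) < 0).
  { intro k. destruct (Gterm_eq (S k) 0 y) as [_ E2]. fold (Yk y k) in E2. rewrite E2.
    assert (0 < Yk y k) by (rewrite Yk_eq; pose proof (pos_INR k); lra).
    set (Y := Yk y k) in *.
    replace ((0*0 - Y*Y) / ((0*0+Y*Y)*(0*0+Y*Y))) with (- / (Y*Y)) by (field; lra).
    assert (0 < / (Y*Y)) by (apply Rinv_0_lt_compat; nra). lra. }
  rewrite Series_incr_1 by auto.
  pose proof (Hneg 0%nat).
  assert (0 <= Series (fun k => - Cim (Gterm (S (S k)) (mkC 0 y)))).
  { apply Series_nonneg. apply ex_series_incr_1 in Him.
    apply (ex_series_scal (-1)) in Him. eapply ex_series_ext. 2: exact Him. intro; simpl. change (scal (-1) ?a) with ((-1)*a). ring.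
    intro k; pose proof (Hneg (S k)); lra. }
  rewrite Series_opp in H0.
  assert (Hg : forall a c, a < 0 -> 0 <= - c -> a + c < 0) by (intros; lra).
  apply Hg; assumption.
Qed.
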